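(* Let $G$ be a group with identity $e$, $A$ a set with at least two elements, and $\tau: A^G\to A^G$ a lazy cellular automaton with minimal neighborhood $S \subseteq G$, unique active transition $p \in A^S$ and writing symbol $a \in A \setminus \{p(e)\}$. For $b \in A$ let $S_b := \{s\in S : p(s) = b\}$. Assume at least one of the following holds: \begin{enumerate} \item $S_a = \emptyset$; \item $S_a^{-1}\subseteq S_b^{-1}S_a$ for some $b\in A\setminus\{a\}$; \item $S_a^{-1}\subseteq S_{b_1}^{-1}S_{b_2}$ for some $b_1, b_2\in A\setminus\{a\}$ with $b_1\neq b_2$. \end{enumerate} Then $\tau$ is idempotent, i.e., $\tau^2 = \tau$.
   Context: $A^G$ is the set of maps $G \to A$ with shift action $(g\cdot x)(h) := x(hg)$. A cellular automaton is a map $\tau : A^G \to A^G$ with a finite $S \subseteq G$ (a neighborhood) and $\mu : A^S \to A$ such that $\tau(x)(g) = \mu((g\cdot x)|_S)$; the minimal neighborhood is the unique neighborhood of smallest cardinality. $\tau$ is lazy with unique active transition $p \in A^S$ if there is a local defining map $\mu : A^S \to A$ with $e \in S$ such that for all $z \in A^S$: $\mu(z) = z(e)$ iff $z \neq p$; its writing symbol is $a:=\mu(p)$. For $S, K \subseteq G$, $SK := \{sk : s\in S, k \in K\}$ and $S^{-1} := \{s^{-1} : s\in S\}$. *)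

(* Defs.v *)
From Stdlib Require Import List.

Definition is_group {G : Type} (mul : G -> G -> G) (inv : G -> G) (e : G) : Prop :=
  (forall x y z, mul (mul x y) z = mul x (mul y z)) /\
  (forall x, mul e x = x) /\ (forall x, mul x e = x) /\
  (forall x, mul (inv x) x = e) /\ (forall x, mul x (inv x) = e).

Definition finite_subset {G : Type} (S : G -> Prop) : Prop :=
  exists l : list G, forall g, S g <-> In g l.

Definition card_le {G : Type} (S T : G -> Prop) : Prop :=
  exists f : {s | S s} -> {t | T t}, forall u v, f u = f v -> u = v.

Definition shift {G A : Type} (mul : G -> G -> G) (g : G) (x : G -> A) : G -> A :=
  fun h => x (mul h g).

Definition restrict {G A : Type} (S : G -> Prop) (x : G -> A) : {s | S s} -> A :=
  fun s => x (proj1_sig s).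

Definition local_map_for {G A : Type} (mul : G -> G -> G) (S : G -> Prop)
  (mu : ({s | S s} -> A) -> A) (tau : (G -> A) -> (G -> A)) : Prop :=
  forall x g, tau x g = mu (restrict S (shift mul g x)).

Definition is_neighborhood {G A : Type} (mul : G -> G -> G)
  (tau : (G -> A) -> (G -> A)) (S : G -> Prop) : Prop :=
  finite_subset S /\ exists mu : ({s | S s} -> A) -> A, local_map_for mul S mu tau.

Definition is_minimal_neighborhood {G A : Type} (mul : G -> G -> G)
  (tau : (G -> A) -> (G -> A)) (S : G -> Prop) : Prop :=
  is_neighborhood mul tau S /\
  forall T, is_neighborhood mul tau T -> card_le S T.

Definition level_set {G A : Type} (S : G -> Prop) (p : {s | S s} -> A) (b : A) : G -> Prop :=
  fun g => exists H : S g, p (exist _ g H) = b.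

Definition set_inv {G : Type} (inv : G -> G) (K : G -> Prop) : G -> Prop :=
  fun g => exists k, K k /\ g = inv k.
Definition set_mul {G : Type} (mul : G -> G -> G) (K L : G -> Prop) : G -> Prop :=
  fun g => exists k l, K k /\ L l /\ g = mul k l.
Definition subset {G : Type} (K L : G -> Prop) : Prop := forall g, K g -> L g.

(* Main.v *)
Require Import Defs.
From Stdlib Require Import Classical FunctionalExtensionality.

Theorem corollary3
  (G : Type) (mul : G -> G -> G) (inv : G -> G) (e : G)
  (HG : is_group mul inv e)
  (A : Type) (HA : exists a1 a2 : A, a1 <> a2)
  (tau : (G -> A) -> (G -> A))
  (S : G -> Prop) (HS : is_minimal_neighborhood mul tau S)
  (He : S e)
  (mu : ({s | S s} -> A) -> A) (Hmu : local_map_for mul S mu tau)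
  (p : {s | S s} -> A)
  (Hlazy : forall z : {s | S s} -> A, mu z = z (exist _ e He) <-> z <> p)
  (a : A) (Ha : a = mu p) (Hap : a <> p (exist _ e He)) :
  (forall g, ~ level_set S p a g) \/
  (exists b, b <> a /\
     subset (set_inv inv (level_set S p a))
            (set_mul mul (set_inv inv (level_set S p b)) (level_set S p a))) \/
  (exists b1 b2, b1 <> a /\ b2 <> a /\ b1 <> b2 /\
     subset (set_inv inv (level_set S p a))
            (set_mul mul (set_inv inv (level_set S p b1)) (level_set S p b2))) ->
  forall x : G -> A, tau (tau x) = tau x.
Proof.
  intros Hcases x.
  destruct HG as [Hassoc [Hel [Her [Hil Hir]]]].
  assert (L1 : forall y h, (forall t : {s | S s}, y (mul (proj1_sig t) h) = p t) -> tau y h = a).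
  { intros y h Hy. rewrite Hmu, Ha. f_equal. apply functional_extensionality.
    intros t. unfold restrict, shift. apply Hy. }
  assert (L2 : forall y h, ~ (forall t : {s | S s}, y (mul (proj1_sig t) h) = p t) -> tau y h = y h).
  { intros y h Hy. rewrite Hmu. rewrite (proj2 (Hlazy _)).
    - unfold restrict, shift; simpl. rewrite Hel. reflexivity.
    - intros Heq. apply Hy. intros t. rewrite <- Heq. reflexivity. }
  assert (L3 : forall y h, tau y h <> a -> tau y h = y h).
  { intros y h Hne. apply L2. intros Hy. apply Hne. apply L1. exact Hy. }
  assert (Grp : forall s r u, inv s = mul (inv r) u -> mul u s = r).
  { intros s r u H.
    assert (Hu : mul r (inv s) = u).
    { rewrite H, <- Hassoc, Hir, Hel. reflexivity. }
    rewrite <- Hu, Hassoc, Hil, Her. reflexivity. }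
  apply functional_extensionality. intros g.
  destruct (classic (forall t : {s | S s}, tau x (mul (proj1_sig t) g) = p t)) as [P | NP].
  2: { apply L2. exact NP. }
  exfalso.
  assert (Pe := P (exist _ e He)). simpl in Pe. rewrite Hel in Pe.
  assert (C : forall t : {s | S s}, p t <> a -> x (mul (proj1_sig t) g) = p t).
  { intros t Ht. rewrite <- (L3 x). apply P. rewrite P. exact Ht. }
  assert (NA : ~ (forall t : {s | S s}, x (mul (proj1_sig t) g) = p t)).
  { intros Hx. apply L1 in Hx. apply Hap. rewrite <- Pe, Hx. reflexivity. }
  apply not_all_ex_not in NA. destruct NA as [[s Hs] Hxs]. simpl in Hxs.
  assert (Hpa : p (exist _ s Hs) = a).
  { apply NNPP. intros Hn. apply Hxs. apply (C (exist _ s Hs)). exact Hn. }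
  assert (Q : forall t : {s | S s}, x (mul (proj1_sig t) (mul s g)) = p t).
  { apply NNPP. intros Hn. apply L2 in Hn.
    assert (Ps := P (exist _ s Hs)). simpl in Ps. rewrite Hn, Hpa in Ps.
    apply Hxs. rewrite Hpa. exact Ps. }
  assert (Hlev : level_set S p a s) by (exists Hs; exact Hpa).
  assert (Hinv : set_inv inv (level_set S p a) (inv s)) by (exists s; split; auto).
  destruct Hcases as [H1 | [[b [Hb Hsub]] | [b1 [b2 [Hb1 [Hb2 [Hb12 Hsub]]]]]]].
  - exact (H1 s Hlev).
  - destruct (Hsub _ Hinv) as [k [l [[r [[Hr Hrb] ->]] [[Hl Hlb] Heq]]]].
    assert (E := Grp _ _ _ Heq).
    assert (Q1 := Q (exist _ l Hl)). simpl in Q1.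
    rewrite <- Hassoc, E, Hlb in Q1.
    assert (C1 := C (exist _ r Hr)). simpl in C1. rewrite Hrb in C1.
    apply Hb. rewrite <- C1 by exact Hb. exact Q1.
  - destruct (Hsub _ Hinv) as [k [l [[r [[Hr Hrb] ->]] [[Hl Hlb] Heq]]]].
    assert (E := Grp _ _ _ Heq).
    assert (Q1 := Q (exist _ l Hl)). simpl in Q1.
    rewrite <- Hassoc, E, Hlb in Q1.
    assert (C1 := C (exist _ r Hr)). simpl in C1. rewrite Hrb in C1.
    apply Hb12. rewrite <- C1 by exact Hb1. exact Q1.
Qed.
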